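(* Let $E$ be a real normed vector space, $C\subseteq E$ a nonempty closed convex set, $\phi\colon\mathbb{R}\to[0,+\infty]$ convex with $\phi(0)=0$, and $\psi\colon E\to(-\infty,+\infty]$ a $\phi$-convex function, real-valued on $C$ and $+\infty$ outside $C$. Assume $\partial\psi(C)=E^*$ or $C$ is compact; let $a\in C$, $a^\psi\in\partial\psi(a)$, with arbitrary predictions $\widehat{x}_t^*\in E^*$. (i) If $\theta_t=1$ for all $t$ (Optimistic Dual Averaging) and $\eta_1\geqslant\dots\geqslant\eta_{T+1}>0$, strategy S satisfies for all $z\in C$: \[\mathrm{Regret}(z,\dots,z)\leqslant\frac{1}{\eta_{T+1}}B_\psi(z,a^\psi)+\sum_{t=1}^T\frac{1}{\eta_t}\phi^\star\big(\eta_t\lVert x_t^*-\widehat{x}_t^*\rVert\big)-\sum_{t=1}^T\frac{1}{\eta_t}B_\psi\big(x_t,\widetilde{x}_t^\psi\big).\] (ii) If $\eta_t=1$ for all $t$ and $0<\theta_1\leqslant\dots\leqslant\theta_T$, strategy S satisfies for all $z\in C$: \[\mathrm{Regret}(z,\dots,z)\leqslant\frac{1}{\theta_1}B_\psi(z,a^\psi)+\sum_{t=1}^T\frac{1}{\theta_t}\phi^\star\big(\theta_t\lVert x_t^*-\widehat{x}_t^*\rVert\big)-\sum_{t=1}^T\frac{1}{\theta_t}B_\psi\big(x_t,\widetilde{x}_t^\psi\big).\]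
   Context: $E^*$ dual of $E$, $\langle\cdot,\cdot\rangle$ pairing, $\lVert\cdot\rVert$ norm/dual norm. $f^\star(x^* )=\sup_{x}(\langle x^*,x\rangle-f(x))$; $B_f(x,y^* )=f(x)+f^\star(y^* )-\langle y^*,x\rangle$; $\partial f(x)=\{x^*:B_f(x,x^* )=0\}$; $\partial f(C)=\bigcup_{x\in C}\partial f(x)$; $\partial\psi^\star(x^* ):=\arg\max_{x\in E}(\langle x^*,x\rangle-\psi(x))$. $\phi^\star$ is the Fenchel conjugate of $\phi$. $\psi$ is $\phi$-convex if $B_\psi(x,y^* )\geqslant\phi(\lVert x-y\rVert)$ for all $x\in E$ and all $y$, $y^*\in\partial\psi(y)$. Protocol: at rounds $t=1,\dots,T$ the learner chooses $x_t\in C$, the adversary reveals a proper $\varphi_t$ with $C\subseteq\operatorname{dom}\partial\varphi_t$, $x_t^*\in\partial\varphi_t(x_t)$; $\mathrm{Regret}(z_1,\dots,z_T)=\sum_t\varphi_t(x_t)-\sum_t\varphi_t(z_t)$. Strategy S with parameters $\eta_t,\theta_t>0$: $\widetilde{x}_t^\psi=a^\psi-\eta_t\sum_{i=1}^{t-1}\theta_ix_i^*$, $x_t\in\partial\psi^\star(\widetilde{x}_t^\psi-\eta_t\theta_t\widehat{x}_t^* )$. *)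

(* Defs.v *)
From HB Require Import structures.
From mathcomp Require Import all_boot all_order all_algebra.
From mathcomp Require Import all_classical all_reals all_analysis.
Set Implicit Arguments. Unset Strict Implicit. Unset Printing Implicit Defensive.
Import Order.TTheory GRing.Theory Num.Theory.
Import numFieldNormedType.Exports.
Local Open Scope classical_set_scope.
Local Open Scope ring_scope.

Section Defs.
Variables (R : realType) (E : normedModType R).

Definition is_dual (f : E -> R) : Prop :=
  (forall (a : R) (u v : E), f (a *: u + v) = a * f u + f v) /\ continuous f.

Definition dnorm (f : E -> R) : R :=
  sup [set `|f x| | x in [set x : E | `|x| <= 1]].

Definition fconj (f : E -> \bar R) (xs : E -> R) : \bar R :=
  ereal_sup [set ((xs x)%:E - f x)%E | x in [set: E]].

Definition breg (f : E -> \bar R) (x : E) (ys : E -> R) : \bar R :=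
  (f x + fconj f ys - (ys x)%:E)%E.

Definition subdiff (f : E -> \bar R) (x : E) : set (E -> R) :=
  [set xs | is_dual xs /\ breg f x xs = 0%E].

Definition subdiff_conj (f : E -> \bar R) (xs : E -> R) : set E :=
  [set x | forall y : E, ((xs y)%:E - f y <= (xs x)%:E - f x)%E].

Definition proper_fun (f : E -> \bar R) : Prop :=
  (forall x, f x != -oo%E) /\ exists x, f x \is a fin_num.

Definition convex_set_ (C : set E) : Prop :=
  forall x y (t : R), C x -> C y -> 0 <= t <= 1 -> C (t *: x + (1 - t) *: y).

Definition phi_convex (phi : R -> \bar R) (psi : E -> \bar R) : Prop :=
  forall (x y : E) ys, subdiff psi y ys -> (phi (`|x - y|)%R <= breg psi x ys)%E.

Definition xtilde (apsi : E -> R) (eta theta : nat -> R) (xs : nat -> E -> R)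
  (t : nat) : E -> R :=
  fun v => apsi v - eta t * \sum_(1 <= i < t) theta i * xs i v.

Definition strategyS (psi : E -> \bar R) (apsi : E -> R) (eta theta : nat -> R)
  (xhat : nat -> E -> R) (x : nat -> E) (xs : nat -> E -> R) (T : nat) : Prop :=
  forall t, (1 <= t <= T)%N ->
    subdiff_conj psi (fun v => xtilde apsi eta theta xs t v
                               - eta t * theta t * xhat t v) (x t).

Definition protocol (C : set E) (loss : nat -> E -> \bar R) (x : nat -> E)
  (xs : nat -> E -> R) (T : nat) : Prop :=
  forall t, (1 <= t <= T)%N ->
    [/\ C (x t), proper_fun (loss t),
        (forall y, C y -> exists ys, subdiff (loss t) y ys)
      & subdiff (loss t) (x t) (xs t)].

Definition regret (loss : nat -> E -> \bar R) (x : nat -> E) (z : E) (T : nat)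
  : \bar R :=
  (\sum_(1 <= t < T.+1) loss t (x t) - \sum_(1 <= t < T.+1) loss t z)%E.

End Defs.

Definition convex_ext {R : realType} (phi : R -> \bar R) : Prop :=
  forall (x y t : R), 0 <= t <= 1 ->
    (phi (t * x + (1 - t) * y)%R <= t%:E * phi x + (1 - t)%:E * phi y)%E.

Definition rconj {R : realType} (phi : R -> \bar R) (r : R) : \bar R :=
  ereal_sup [set ((r * s)%:E - phi s)%E | s in [set: R]].

(* Main.v *)
Require Import Defs.
From HB Require Import structures.
From mathcomp Require Import all_boot all_order all_algebra.
From mathcomp Require Import all_classical all_reals all_analysis.
From mathcomp Require Import ring lra zify.
Import Order.TTheory GRing.Theory Num.Theory.
Import numFieldNormedType.Exports.
Local Open Scope classical_set_scope.
Local Open Scope ring_scope.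

Module Helpers.
Set Implicit Arguments. Unset Strict Implicit. Unset Printing Implicit Defensive.


Section Dual.
Variables (R : realType) (E : normedModType R).

Lemma dual0 (f : E -> R) : is_dual f -> f 0 = 0.
Proof.
move=> [lin _]; have := lin 1 0 0; rewrite scale1r addr0 mul1r => h.
by apply: (addrI (f 0)); rewrite addr0 -h.
Qed.

Lemma dualZ (f : E -> R) a u : is_dual f -> f (a *: u) = a * f u.
Proof. by move=> hf; have := hf.1 a u 0; rewrite addr0 dual0 // addr0. Qed.

Lemma dualD (f : E -> R) u v : is_dual f -> f (u + v) = f u + f v.
Proof. by move=> hf; have := hf.1 1 u v; rewrite scale1r mul1r. Qed.

Lemma dualB (f : E -> R) u v : is_dual f -> f (u - v) = f u - f v.
Proof.
move=> hf; rewrite dualD // -scaleN1r dualZ //; by rewrite mulN1r.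
Qed.

Lemma dual_lin (f g : E -> R) (c : R) : is_dual f -> is_dual g ->
  is_dual (fun v => f v - c * g v).
Proof.
move=> hf hg; split.
  move=> a u v; rewrite (hf.1) (hg.1); ring.
move=> x; apply: cvgB; first exact: hf.2.
apply: cvgM; first exact: cvg_cst. exact: hg.2.
Qed.

Lemma dual_zero : is_dual (fun _ : E => 0 : R).
Proof. by split; [move=> *; rewrite mulr0 addr0 | move=> x; exact: cvg_cst]. Qed.

Lemma dual_sum (F : nat -> E -> R) (m n : nat) :
  (forall i, (m <= i < n)%N -> is_dual (F i)) ->
  is_dual (fun v => \sum_(m <= i < n) F i v).
Proof.
elim: n => [|n IH] H.
  have -> : (fun v => \sum_(m <= i < 0) F i v) = fun _ => 0.
    by apply/funext => v; rewrite big_geq.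
  exact: dual_zero.
case: (leqP m n) => hmn.
  have -> : (fun v => \sum_(m <= i < n.+1) F i v) =
    (fun v => \sum_(m <= i < n) F i v - (-1) * F n v).
    by apply/funext => v; rewrite big_nat_recr //= mulN1r opprK.
  apply: dual_lin; last by apply: H; rewrite hmn ltnSn.
  by apply: IH => i /andP[h1 h2]; apply: H; rewrite h1 ltnS ltnW.
have -> : (fun v => \sum_(m <= i < n.+1) F i v) = fun _ => 0.
  by apply/funext => v; rewrite big_geq.
exact: dual_zero.
Qed.

Lemma dual_bounded (f : E -> R) : is_dual f ->
  exists2 M : R, 0 < M & forall x, `|f x| <= M * `|x|.
Proof.
move=> hf.
have := @cvgr_dist_lt _ _ _ (nbhs (0:E)) _ f (f 0) (hf.2 0) _ ltr01.
rewrite dual0 //.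
move=> h; have [d /= d0 hd] := (nbhs_ballP _ _).1 (h _).
exists (2 / d); first by rewrite divr_gt0.
move=> x; have [->|x0] := eqVneq x 0.
  by rewrite dual0 // normr0 normr0 mulr0.
have nx : 0 < `|x| by rewrite normr_gt0.
set k := d / (2 * `|x|).
have k0 : 0 < k by rewrite /k divr_gt0 // mulr_gt0.
have : ball (0:E) d (k *: x).
  rewrite -ball_normE /= sub0r normrN normrZ gtr0_norm // /k.
  have -> : d / (2 * `|x|) * `|x| = d / 2.
    by field; rewrite gt_eqF.
  lra.
move=> /hd /=; rewrite sub0r normrN dualZ // normrM gtr0_norm // => hk.
have : `|f x| < k^-1 by rewrite -(ltr_pM2l k0) mulfV ?gt_eqF.
have -> : k^-1 = 2 / d * `|x| by rewrite /k; field; rewrite !gt_eqF.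
exact: ltW.
Qed.
End Dual.


Section Gen.
Variables (R : realType) (E : normedModType R).

Lemma dual_sub (f g : E -> R) : is_dual f -> is_dual g ->
  is_dual (fun v => f v - g v).
Proof.
move=> hf hg; have := dual_lin 1 hf hg.
by have -> : (fun v => f v - 1 * g v) = (fun v => f v - g v)
  by apply/funext => v; rewrite mul1r.
Qed.

Lemma dnorm_le (f : E -> R) x : is_dual f -> `|f x| <= dnorm f * `|x|.
Proof.
move=> hf; have [M M0 hM] := dual_bounded hf.
have ub : has_ubound [set `|f y| | y in [set y : E | `|y| <= 1]].
  exists M => _ [y /= hy <-]; apply: (le_trans (hM y)).
  by rewrite -[leRHS]mulr1 ler_pM2l.
have [->|x0] := eqVneq x 0; first by rewrite dual0 // !normr0 mulr0.
have nx : 0 < `|x| by rewrite normr_gt0.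
have : `|f (`|x|^-1 *: x)| <= dnorm f.
  rewrite /dnorm; apply: (ub_le_sup ub); exists (`|x|^-1 *: x) => //=.
  by rewrite normrZ ger0_norm ?invr_ge0 ?(ltW nx) // mulVf ?(gt_eqF nx).
rewrite dualZ // normrM ger0_norm ?invr_ge0 ?(ltW nx) //.
move=> h; have h2 : `|x|^-1 * `|f x| * `|x| <= dnorm f * `|x| by rewrite ler_pM2r.
by rewrite mulrAC mulVf ?(gt_eqF nx) // mul1r in h2.
Qed.

Lemma fconj_ge (f : E -> \bar R) ys x : ((ys x)%:E - f x <= fconj f ys)%E.
Proof. by apply: ereal_sup_ubound; exists x. Qed.

Lemma breg0 (f : E -> \bar R) x ys : f x != -oo%E -> fconj f ys != -oo%E ->
  breg f x ys = 0%E ->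
  [/\ f x \is a fin_num, fconj f ys \is a fin_num &
      fine (f x) + fine (fconj f ys) = ys x].
Proof.
rewrite /breg; case: (f x) => [r| |] //; case: (fconj f ys) => [s| |] //= _ _.
by move=> [] /eqP; rewrite subr_eq0 => /eqP.
Qed.

Lemma eshift (p q p' q' : R) (e : \bar R) :
  (p%:E <= q%:E + e)%E -> p' - q' <= p - q -> (p'%:E <= q'%:E + e)%E.
Proof.
case: e => [r| |] //=; rewrite ?lee_fin => h1 h2; last by rewrite leey.
lra.
Qed.

Lemma escale (k p q : R) (e : \bar R) : 0 < k ->
  (p%:E <= q%:E + e)%E -> ((k * p)%:E <= (k * q)%:E + k%:E * e)%E.
Proof.
move=> k0; case: e => [r| |] //=; rewrite ?lee_fin.
  move=> h; rewrite -?EFinM -?EFinD ?lee_fin -?mulrDr ?ler_pM2l //.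
by move=> _; rewrite mulry gtr0_sg // mul1e leey.
Qed.
End Gen.


Section Aux.
Variables (R : realType) (E : normedModType R).

Lemma aux_mono (q s e e' N : R): q <= 0 -> 0 < e' -> e' <= e ->
  q - e * s <= N * e -> q - e' * s <= e' * N.
Proof. move=> *; nra. Qed.

Lemma noninc_ge (f : nat -> R) m T : (forall t, (m <= t <= T)%N -> f t.+1 <= f t) ->
  forall t, (m <= t <= T.+1)%N -> f T.+1 <= f t.
Proof.
move=> H t; move: {2}(T.+1 - t)%N (erefl (T.+1 - t)%N) => n.
elim: n t => [|n IH] t ht /andP[h1 h2].
  by have -> : t = T.+1 by apply/eqP; rewrite eqn_leq h2 /= -subn_eq0 ht.
apply: (le_trans (IH t.+1 _ _)); [lia | apply/andP; split; lia | apply: H; apply/andP; split; lia].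
Qed.

Lemma nondec_ge (f : nat -> R) m T : (forall t, (m <= t < T)%N -> f t <= f t.+1) ->
  forall t, (m <= t <= T)%N -> f m <= f t.
Proof.
move=> H t /andP[]; elim: t => [|t IH].
  by rewrite leqn0 => /eqP ->.
rewrite leq_eqVlt => /orP[/eqP <- //|hm hT].
apply: (le_trans (IH hm (ltnW hT))); apply: H; apply/andP; split; lia.
Qed.

Lemma abel (D th : nat -> R) (T : nat) :
  (forall t, (1 <= t <= T.+1)%N -> 0 <= D t) -> 0 < th 1%N ->
  (forall t, (1 <= t < T)%N -> th t <= th t.+1) ->
  \sum_(1 <= t < T.+1) (D t - D t.+1) / th t <= D 1%N / th 1%N.
Proof.
move=> HD h1 Hth.
have thp : forall t, (1 <= t <= T)%N -> 0 < th t.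
  move=> t ht; apply: (lt_le_trans h1); exact: nondec_ge Hth t ht.
case: T HD Hth thp => [|n] HD Hth thp.
  by rewrite big_geq // divr_ge0 // ?HD // ltW.
suff : \sum_(1 <= t < n.+2) (D t - D t.+1) / th t <= D 1%N / th 1%N - D n.+2 / th n.+1.
  have h2 : 0 <= D n.+2 / th n.+1.
    apply: divr_ge0; first by apply: HD; rewrite leqnn.
    by apply: ltW; apply: thp; rewrite leqnn.
  move=> h3; lra.
elim: n HD Hth thp => [|n IH] HD Hth thp.
  by rewrite big_nat1 mulrBl.
rewrite big_nat_recr //=.
have := IH (fun t ht => HD t (ltac:(move: ht => /andP[-> h]; exact: ltnW)))
  (fun t ht => Hth t (ltac:(move: ht => /andP[-> h]; exact: ltnW)))
  (fun t ht => thp t (ltac:(move: ht => /andP[-> h]; exact: ltnW))).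
move=> h.
have hle : D n.+2 / th n.+2 <= D n.+2 / th n.+1.
  have p1 : 0 < th n.+2 by apply: thp; lia.
  have p2 : 0 < th n.+1 by apply: thp; lia.
  apply: ler_wpM2l; first by apply: HD; lia.
  rewrite lef_pV2 ?posrE //; apply: Hth; lia.
rewrite mulrBl; lra.
Qed.

Lemma loss_fact (f : E -> \bar R) x z ys zs : proper_fun f ->
  subdiff f x ys -> subdiff f z zs ->
  [/\ f x \is a fin_num, f z \is a fin_num & fine (f x) - fine (f z) <= ys x - ys z].
Proof.
move=> [hN [x0 hx0]] [_ hx] [_ hz].
have hc : forall w, fconj f w != -oo%E.
  move=> w; have := fconj_ge f w x0; rewrite -(fineK hx0).
  by case: (fconj f w).
have [fx fc hs] := breg0 (hN x) (hc ys) hx.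
have [fz _ _] := breg0 (hN z) (hc zs) hz.
split => //.
have := fconj_ge f ys z; rewrite -(fineK fz) -(fineK fc) -EFinB lee_fin.
lra.
Qed.

Lemma assemble (T : nat) (L1 L2 Bs q : nat -> R) (e : nat -> \bar R) (K : R) :
  (forall t, (1 <= t <= T)%N -> ((L1 t - L2 t + Bs t)%:E <= (q t)%:E + e t)%E) ->
  \sum_(1 <= t < T.+1) q t <= K ->
  ((\sum_(1 <= t < T.+1) (L1 t)%:E - \sum_(1 <= t < T.+1) (L2 t)%:E)
    + \sum_(1 <= t < T.+1) (Bs t)%:E <= K%:E + \sum_(1 <= t < T.+1) e t)%E.
Proof.
move=> H HK.
rewrite !sumEFin -EFinB -EFinD -sumrB -big_split /= -sumEFin.
apply: (@le_trans _ _ (\sum_(1 <= t < T.+1) ((q t)%:E + e t))%E).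
  rewrite big_nat_cond [X in (_ <= X)%E]big_nat_cond.
  apply: lee_sum => i /andP[/andP[h1 h2] _]; apply: H.
  by rewrite h1 -ltnS.
rewrite big_split /= sumEFin; apply: leeD2r; by rewrite lee_fin.
Qed.
End Aux.


Section Psi.
Variables (R : realType) (E : normedModType R) (C : set E)
  (phi : R -> \bar R) (psi : E -> \bar R) (a : E) (apsi : E -> R).
Hypothesis hfin : forall x, C x -> psi x \is a fin_num.
Hypothesis hout : forall x, ~ C x -> psi x = +oo%E.
Hypothesis hdom : (forall xs, is_dual xs -> exists2 x, C x & subdiff psi x xs) \/ compact C.
Hypothesis hCa : C a.
Hypothesis ha : subdiff psi a apsi.

Lemma psi_nN x : psi x != -oo%E.
Proof.
have [/hfin|/hout ->] := pselect (C x) => //.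
by rewrite fin_numE => /andP[].
Qed.

Lemma fconj_nN ys : fconj psi ys != -oo%E.
Proof.
have := fconj_ge psi ys a; rewrite -(fineK (hfin hCa)).
by case: (fconj psi ys).
Qed.

Lemma fconj_fin ys : is_dual ys -> fconj psi ys \is a fin_num.
Proof.
move=> hys; case: hdom => [hd|hK].
  have [x Cx [_ hb]] := hd ys hys.
  by have [] := breg0 (psi_nN x) (fconj_nN ys) hb.
have [_ hKa hsum] := breg0 (psi_nN a) (fconj_nN apsi) ha.2.
set K := fine (fconj psi apsi).
have hg : is_dual (fun v => ys v - apsi v) := dual_sub hys ha.1.
have := continuous_compact (continuous_subspaceT hg.2) hK.
move=> /compact_bounded [M0 [_ hM0]].
have hM := hM0 (M0 + 1) (ltr_pwDr ltr01 (lexx M0)).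
rewrite fin_numE fconj_nN /=.
suff : (fconj psi ys <= (M0 + 1 + K)%:E)%E by case: (fconj psi ys).
apply: ge_ereal_sup => _ [x _ <-].
have [Cx|nCx] := pselect (C x); last by rewrite hout //= leNye.
rewrite -(fineK (hfin Cx)) -EFinB lee_fin.
have h1 : `|ys x - apsi x| <= M0 + 1 by apply: hM; exists x.
have := fconj_ge psi apsi x; rewrite -(fineK (hfin Cx)) -(fineK hKa) -EFinB lee_fin.
rewrite ler_norml in h1; move=> h2; case/andP: h1 => h1 h3; rewrite /= /K; lra.
Qed.

Definition Psi ys := fine (fconj psi ys).

Lemma PsiE ys : is_dual ys -> fconj psi ys = (Psi ys)%:E.
Proof. by move=> h; rewrite /Psi fineK // fconj_fin. Qed.

Lemma Psi_ge ys x : is_dual ys -> C x -> ys x - fine (psi x) <= Psi ys.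
Proof.
move=> hys Cx; have := fconj_ge psi ys x.
by rewrite PsiE // -(fineK (hfin Cx)) -EFinB lee_fin.
Qed.

Lemma Psi_le ys r : is_dual ys -> (forall x, C x -> ys x - fine (psi x) <= r) ->
  Psi ys <= r.
Proof.
move=> hys H; rewrite -lee_fin -PsiE //.
apply: ge_ereal_sup => _ [x _ <-].
have [Cx|nCx] := pselect (C x); last by rewrite hout //= leNye.
by rewrite -(fineK (hfin Cx)) -EFinB lee_fin H.
Qed.

Lemma bregE x ys : C x -> is_dual ys ->
  breg psi x ys = (fine (psi x) + Psi ys - ys x)%:E.
Proof. by move=> Cx hys; rewrite /breg PsiE // -(fineK (hfin Cx)). Qed.

Lemma Psi_argmax ys p : is_dual ys -> C p -> subdiff_conj psi ys p ->
  Psi ys = ys p - fine (psi p).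
Proof.
move=> hys Cp hp; apply/le_anti/andP; split; last exact: Psi_ge.
apply: Psi_le => // x Cx; have := hp x.
by rewrite -(fineK (hfin Cx)) -(fineK (hfin Cp)) -!EFinB lee_fin.
Qed.


Hypothesis hpc : phi_convex phi psi.
Hypothesis hphige : forall s, (0 <= phi s)%E.

Lemma step (y u h : E -> R) (lam : R) (p : E) :
  is_dual y -> is_dual u -> is_dual h -> 0 < lam -> C p ->
  subdiff_conj psi (fun v => y v - lam * h v) p ->
  ((Psi (fun v => y v - lam * u v))%:E <= (y p - fine (psi p) - lam * u p)%:E
    + rconj phi (lam * dnorm (fun v => u v - h v))%R)%E.
Proof.
move=> hy hu hh l0 Cp hp.
set g := fun v => y v - lam * h v.
have hg : is_dual g := dual_lin lam hy hh.
have hPg : Psi g = g p - fine (psi p) := Psi_argmax hg Cp hp.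
have hsub : subdiff psi p g.
  split => //; rewrite bregE // hPg; congr (_%:E); ring.
have hw : is_dual (fun v => y v - lam * u v) := dual_lin lam hy hu.
have huh : is_dual (fun v => u v - h v) := dual_sub hu hh.
set d := dnorm (fun v => u v - h v).
rewrite -PsiE //.
apply: ge_ereal_sup => _ [x _ <-].
have [Cx|nCx] := pselect (C x); last by rewrite hout //= leNye.
have hb := hpc x hsub.
rewrite bregE // hPg in hb.
set n := `|x - p| in hb.
have hr := @ereal_sup_ubound _ [set ((lam * d * s)%:E - phi s)%E | s in [set: R]] _ (ex_intro2 _ _ n I erefl).
move: hb hr (hphige n); case: (phi n) => [r| |] //= hb hr _.
rewrite lee_fin in hb.
apply: (@le_trans _ _ ((y p - fine (psi p) - lam * u p)%:E + (lam * d * n - r)%:E)%E); last first.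
  by apply: leeD2l; rewrite EFinB; exact: hr.
rewrite -(fineK (hfin Cx)) -EFinB -EFinD lee_fin.
have hn := dnorm_le (x - p) huh.
rewrite (dualB x p huh) /= in hn.
have : - (u x - h x - (u p - h p)) <= d * n.
  by apply: le_trans hn; rewrite -normrN; exact: ler_norm.
move=> h4; have h5 : lam * (- (u x - h x - (u p - h p))) <= lam * (d * n).
  by rewrite ler_pM2l.
rewrite /g in hb; lra.
Qed.

Lemma mono (S : E -> R) e' e : is_dual S -> 0 < e' -> e' <= e ->
  (Psi (fun v => apsi v - e' * S v) - Psi apsi) / e' <=
  (Psi (fun v => apsi v - e * S v) - Psi apsi) / e.
Proof.
move=> hS e'0 ee'.
have e0 : 0 < e := lt_le_trans e'0 ee'.
set N := (Psi (fun v => apsi v - e * S v) - Psi apsi) / e.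
have hN : N * e = Psi (fun v => apsi v - e * S v) - Psi apsi by rewrite /N divfK ?gt_eqF.
rewrite ler_pdivrMr //.
suff : Psi (fun v => apsi v - e' * S v) <= e' * N + Psi apsi by lra.
apply: Psi_le; first exact: (dual_lin e' ha.1 hS).
move=> x Cx.
have h1 := Psi_ge ha.1 Cx.
have h2 := Psi_ge (dual_lin e ha.1 hS) Cx.
have h4 := @aux_mono _ (apsi x - fine (psi x) - Psi apsi) (S x) e e' N.
simpl in h2. lra.
Qed.

Lemma part1 (T : nat) (eta : nat -> R) (xhat : nat -> E -> R)
  (loss : nat -> E -> \bar R) (x : nat -> E) (xs : nat -> E -> R) :
  (forall t, (1 <= t <= T)%N -> eta t.+1 <= eta t) -> 0 < eta T.+1 ->
  (forall t, (1 <= t <= T)%N -> is_dual (xhat t)) ->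
  protocol C loss x xs T ->
  strategyS psi apsi eta (fun _ => 1%R) xhat x xs T ->
  forall z, C z ->
    (regret loss x z T
     + \sum_(1 <= t < T.+1) (eta t)^-1%:E
         * breg psi (x t) (xtilde apsi eta (fun _ => 1%R) xs t)
     <= (eta T.+1)^-1%:E * breg psi z apsi
        + \sum_(1 <= t < T.+1) (eta t)^-1%:E
            * rconj phi (eta t * dnorm (fun v => xs t v - xhat t v))%R)%E.
Proof.
move=> Heta HT Hxh Hp Hs z Cz.
have etap : forall t, (1 <= t <= T.+1)%N -> 0 < eta t.
  move=> t ht; apply: (lt_le_trans HT); exact: noninc_ge Heta t ht.
have Hd : forall t, (1 <= t <= T)%N -> is_dual (xs t).
  by move=> t /Hp [_ _ _ []].
have HC : forall t, (1 <= t <= T)%N -> C (x t).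
  by move=> t /Hp [].
pose S t := fun v => \sum_(1 <= i < t) xs i v.
have HS : forall t, (t <= T.+1)%N -> is_dual (S t).
  move=> t ht; apply: dual_sum => i hi; apply: Hd; lia.
pose xt t := fun v => apsi v - eta t * S t v.
have xtE : forall t, xtilde apsi eta (fun _ => 1) xs t = xt t.
  move=> t; apply/funext => v; rewrite /xtilde /xt /S; congr (_ - _ * _).
  by apply: eq_bigr => i _; rewrite mul1r.
have Hxt : forall t, (t <= T.+1)%N -> is_dual (xt t).
  by move=> t ht; apply: dual_lin; [exact: ha.1 | exact: HS].
pose W t := (Psi (xt t) - Psi apsi) / eta t.
pose B t := fine (psi (x t)) + Psi (xt t) - xt t (x t).
pose L1 t := fine (loss t (x t)).
pose L2 t := fine (loss t z).
pose Bz := fine (psi z) + Psi apsi - apsi z.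
have Hloss : forall t, (1 <= t <= T)%N -> [/\ loss t (x t) \is a fin_num,
    loss t z \is a fin_num & L1 t - L2 t <= xs t (x t) - xs t z].
  move=> t ht; have [_ hpr hsz hsx] := Hp t ht.
  have [zs hzs] := hsz z Cz.
  exact: loss_fact hpr hsx hzs.
have LHSE : (regret loss x z T + \sum_(1 <= t < T.+1) (eta t)^-1%:E
     * breg psi (x t) (xtilde apsi eta (fun _ => 1%R) xs t) =
   (\sum_(1 <= t < T.+1) (L1 t)%:E - \sum_(1 <= t < T.+1) (L2 t)%:E)
   + \sum_(1 <= t < T.+1) ((eta t)^-1 * B t)%:E)%E.
  rewrite /regret; congr (_ - _ + _)%E; apply: eq_big_nat => t ht.
  - by have [h _ _] := Hloss t ht; rewrite /L1 fineK.
  - by have [_ h _] := Hloss t ht; rewrite /L2 fineK.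
  - rewrite xtE bregE; [by rewrite -EFinM | exact: HC | apply: Hxt; lia].
rewrite LHSE.
have RHSE : ((eta T.+1)^-1%:E * breg psi z apsi = ((eta T.+1)^-1 * Bz)%:E)%E.
  by rewrite bregE; [rewrite -EFinM | exact: Cz | exact: ha.1].
rewrite RHSE.
apply: (assemble (q := fun t => W t - W t.+1 - xs t z)).
  move=> t ht.
  have e0 : 0 < eta t by apply: etap; lia.
  have hstr := Hs t ht; rewrite xtE in hstr.
  have hstr' : subdiff_conj psi (fun v => xt t v - eta t * xhat t v) (x t).
    by move: hstr; congr (subdiff_conj _ _ _); apply/funext => v; rewrite mulr1.
  have hst := step (Hxt t (ltac:(lia))) (Hd t ht) (Hxh t ht) e0 (HC t ht) hstr'.
  have xt' : (fun v => xt t v - eta t * xs t v) = (fun v => apsi v - eta t * S t.+1 v).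
    apply/funext => v; rewrite /xt /S big_nat_recr /=; last by lia.
    ring.
  rewrite xt' in hst.
  have ie0 : 0 < (eta t)^-1 by rewrite invr_gt0.
  have hsc := escale ie0 hst.
  have hmono : W t.+1 <= (Psi (fun v => apsi v - eta t * S t.+1 v) - Psi apsi) / eta t.
    apply: mono; [apply: HS; lia | apply: etap; lia | apply: Heta; lia].
  apply: eshift hsc _.
  have [_ _ hl] := Hloss t ht.
  have hie : (eta t)^-1 * eta t = 1 by rewrite mulVf ?gt_eqF.
  have ex : (eta t)^-1 * (xt t (x t) - fine (psi (x t)) - eta t * xs t (x t)) =
    (eta t)^-1 * xt t (x t) - (eta t)^-1 * fine (psi (x t)) - xs t (x t).
    by field; rewrite gt_eqF.
  rewrite ex; move: hmono; rewrite /W /B !mulrBl (mulrC _ (eta t)^-1) /=.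
  move=> hmono; rewrite -/(xt t) in hmono *.
  lra.
have hz := Psi_ge (Hxt T.+1 (leqnn _)) Cz.
have eT : 0 < eta T.+1 := HT.
have ieT : (eta T.+1)^-1 * eta T.+1 = 1 by rewrite mulVf ?gt_eqF.
have hW : (apsi z - eta T.+1 * S T.+1 z - fine (psi z) - Psi apsi) * (eta T.+1)^-1
    <= W T.+1.
  by rewrite /W ler_pM2r ?invr_gt0 //; rewrite /xt /= in hz; lra.
have hW2 : (apsi z - eta T.+1 * S T.+1 z - fine (psi z) - Psi apsi) * (eta T.+1)^-1
    = - S T.+1 z - (eta T.+1)^-1 * Bz.
  rewrite /Bz !mulrBl (mulrC (eta T.+1)) -mulrA (mulrC (eta T.+1)) ieT mulr1; ring.
have hW1 : W 1%N = 0.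
  rewrite /W; have -> : xt 1%N = apsi by apply/funext => v; rewrite /xt /S big_geq // mulr0 subr0.
  by rewrite /W subrr mul0r.
have tele : \sum_(1 <= t < T.+1) (W t - W t.+1 - xs t z)
    = W 1%N - W T.+1 - S T.+1 z.
  rewrite sumrB; congr (_ - _).
  rewrite -[LHS]opprK -sumrN.
  have -> : \sum_(1 <= i < T.+1) - (W i - W i.+1) = \sum_(1 <= i < T.+1) (W i.+1 - W i).
    by apply: eq_bigr => i _; rewrite opprB.
  by rewrite telescope_sumr // opprB.
rewrite tele hW1; lra.
Qed.

Lemma part2 (T : nat) (theta : nat -> R) (xhat : nat -> E -> R)
  (loss : nat -> E -> \bar R) (x : nat -> E) (xs : nat -> E -> R) :
  0 < theta 1%N -> (forall t, (1 <= t < T)%N -> theta t <= theta t.+1) ->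
  (forall t, (1 <= t <= T)%N -> is_dual (xhat t)) ->
  protocol C loss x xs T ->
  strategyS psi apsi (fun _ => 1%R) theta xhat x xs T ->
  forall z, C z ->
    (regret loss x z T
     + \sum_(1 <= t < T.+1) (theta t)^-1%:E
         * breg psi (x t) (xtilde apsi (fun _ => 1%R) theta xs t)
     <= (theta 1%N)^-1%:E * breg psi z apsi
        + \sum_(1 <= t < T.+1) (theta t)^-1%:E
            * rconj phi (theta t * dnorm (fun v => xs t v - xhat t v))%R)%E.
Proof.
move=> Hth1 Hth Hxh Hp Hs z Cz.
have thp : forall t, (1 <= t <= T)%N -> 0 < theta t.
  move=> t ht; apply: (lt_le_trans Hth1); exact: nondec_ge Hth t ht.
have Hd : forall t, (1 <= t <= T)%N -> is_dual (xs t).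
  by move=> t /Hp [_ _ _ []].
have HC : forall t, (1 <= t <= T)%N -> C (x t).
  by move=> t /Hp [].
pose S t := fun v => \sum_(1 <= i < t) theta i * xs i v.
have HS : forall t, (t <= T.+1)%N -> is_dual (S t).
  move=> t ht; apply: dual_sum => i hi.
  have -> : (fun v => theta i * xs i v) = (fun v => 0 - (- theta i) * xs i v).
    by apply/funext => v; ring.
  apply: dual_lin; first exact: dual_zero.
  apply: Hd; lia.
pose xt t := fun v => apsi v - S t v.
have xtE : forall t, xtilde apsi (fun _ => 1) theta xs t = xt t.
  by move=> t; apply/funext => v; rewrite /xtilde /xt /S mul1r.
have Hxt : forall t, (t <= T.+1)%N -> is_dual (xt t).
  by move=> t ht; apply: dual_sub; [exact: ha.1 | exact: HS].
pose D t := Psi (xt t) - (xt t z - fine (psi z)).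
pose B t := fine (psi (x t)) + Psi (xt t) - xt t (x t).
pose L1 t := fine (loss t (x t)).
pose L2 t := fine (loss t z).
pose Bz := fine (psi z) + Psi apsi - apsi z.
have Hloss : forall t, (1 <= t <= T)%N -> [/\ loss t (x t) \is a fin_num,
    loss t z \is a fin_num & L1 t - L2 t <= xs t (x t) - xs t z].
  move=> t ht; have [_ hpr hsz hsx] := Hp t ht.
  have [zs hzs] := hsz z Cz.
  exact: loss_fact hpr hsx hzs.
have LHSE : (regret loss x z T + \sum_(1 <= t < T.+1) (theta t)^-1%:E
     * breg psi (x t) (xtilde apsi (fun _ => 1%R) theta xs t) =
   (\sum_(1 <= t < T.+1) (L1 t)%:E - \sum_(1 <= t < T.+1) (L2 t)%:E)
   + \sum_(1 <= t < T.+1) ((theta t)^-1 * B t)%:E)%E.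
  rewrite /regret; congr (_ - _ + _)%E; apply: eq_big_nat => t ht.
  - by have [h _ _] := Hloss t ht; rewrite /L1 fineK.
  - by have [_ h _] := Hloss t ht; rewrite /L2 fineK.
  - rewrite xtE bregE; [by rewrite -EFinM | exact: HC | apply: Hxt; lia].
rewrite LHSE.
have RHSE : ((theta 1%N)^-1%:E * breg psi z apsi = ((theta 1%N)^-1 * Bz)%:E)%E.
  by rewrite bregE; [rewrite -EFinM | exact: Cz | exact: ha.1].
rewrite RHSE.
have xt' : forall t, (1 <= t)%N ->
    (fun v => xt t v - theta t * xs t v) = xt t.+1.
  move=> t ht; apply/funext => v; rewrite /xt /S big_nat_recr //=; ring.
apply: (assemble (q := fun t => (D t - D t.+1) / theta t)).
  move=> t ht.
  have e0 : 0 < theta t by apply: thp.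
  have hstr := Hs t ht; rewrite xtE in hstr.
  have hstr' : subdiff_conj psi (fun v => xt t v - theta t * xhat t v) (x t).
    by move: hstr; congr (subdiff_conj _ _ _); apply/funext => v; rewrite mul1r.
  have hst := step (Hxt t (ltac:(lia))) (Hd t ht) (Hxh t ht) e0 (HC t ht) hstr'.
  rewrite xt' in hst; last by lia.
  have ie0 : 0 < (theta t)^-1 by rewrite invr_gt0.
  have hsc := escale ie0 hst.
  apply: eshift hsc _.
  have [_ _ hl] := Hloss t ht.
  have ex : (theta t)^-1 * (xt t (x t) - fine (psi (x t)) - theta t * xs t (x t)) =
    (theta t)^-1 * xt t (x t) - (theta t)^-1 * fine (psi (x t)) - xs t (x t).
    by field; rewrite gt_eqF.
  have hz : xt t.+1 z = xt t z - theta t * xs t z.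
    by rewrite -xt'; last by lia.
  have eD : (D t - D t.+1) / theta t =
     (theta t)^-1 * Psi (xt t) - (theta t)^-1 * Psi (xt t.+1) - xs t z.
    by rewrite /D hz; field; rewrite gt_eqF.
  rewrite ex eD /B; lra.
have hD1 : D 1%N = Bz.
  rewrite /D /Bz; have -> : xt 1%N = apsi.
    by apply/funext => v; rewrite /xt /S big_geq // subr0.
  ring.
rewrite mulrC -hD1; apply: abel => //.
move=> t ht; rewrite /D; have := Psi_ge (Hxt t (ltac:(lia))) Cz; lra.
Qed.

End Psi.

End Helpers.

Theorem corollary3 (R : realType) (E : normedModType R) (C : set E)
  (phi : R -> \bar R) (psi : E -> \bar R) (a : E) (apsi : E -> R) :
  C !=set0 -> closed C -> convex_set_ C ->
  convex_ext phi -> phi 0 = 0%E -> (forall s, (0 <= phi s)%E) ->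
  phi_convex phi psi ->
  (forall x, C x -> psi x \is a fin_num) ->
  (forall x, ~ C x -> psi x = +oo%E) ->
  ((forall xs, is_dual xs -> exists2 x, C x & subdiff psi x xs) \/ compact C) ->
  C a -> subdiff psi a apsi ->
  (* (i) Optimistic Dual Averaging: theta_t = 1 *)
  (forall (T : nat) (eta : nat -> R) (xhat : nat -> E -> R)
      (loss : nat -> E -> \bar R) (x : nat -> E) (xs : nat -> E -> R),
    (forall t, (1 <= t <= T)%N -> eta t.+1 <= eta t) -> 0 < eta T.+1 ->
    (forall t, (1 <= t <= T)%N -> is_dual (xhat t)) ->
    protocol C loss x xs T ->
    strategyS psi apsi eta (fun _ => 1%R) xhat x xs T ->
    forall z, C z ->
      (regret loss x z T
       + \sum_(1 <= t < T.+1) (eta t)^-1%:E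
           * breg psi (x t) (xtilde apsi eta (fun _ => 1%R) xs t)
       <= (eta T.+1)^-1%:E * breg psi z apsi
          + \sum_(1 <= t < T.+1) (eta t)^-1%:E
              * rconj phi (eta t * dnorm (fun v => xs t v - xhat t v))%R)%E)
  /\
  (* (ii) eta_t = 1, nondecreasing theta *)
  (forall (T : nat) (theta : nat -> R) (xhat : nat -> E -> R)
      (loss : nat -> E -> \bar R) (x : nat -> E) (xs : nat -> E -> R),
    0 < theta 1%N -> (forall t, (1 <= t < T)%N -> theta t <= theta t.+1) ->
    (forall t, (1 <= t <= T)%N -> is_dual (xhat t)) ->
    protocol C loss x xs T ->
    strategyS psi apsi (fun _ => 1%R) theta xhat x xs T ->
    forall z, C z ->
      (regret loss x z T
       + \sum_(1 <= t < T.+1) (theta t)^-1%:E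
           * breg psi (x t) (xtilde apsi (fun _ => 1%R) theta xs t)
       <= (theta 1%N)^-1%:E * breg psi z apsi
          + \sum_(1 <= t < T.+1) (theta t)^-1%:E
              * rconj phi (theta t * dnorm (fun v => xs t v - xhat t v))%R)%E).
Proof.
move=> _ _ _ _ _ hphige hpc hfin hout hdom hCa ha; split.
  exact: (Helpers.part1 hfin hout hdom hCa ha hpc hphige).
exact: (Helpers.part2 hfin hout hdom hCa ha hpc hphige).
Qed.
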